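(* Let $G$ be a connected locally finite quasi-transitive graph with exactly $2$ ends. Then $G$ has a periodic proper vertex-coloring with $\chi(G)$ colors.
   Context: A graph is locally finite if every vertex has finite degree. A graph $G$ is quasi-transitive if $V(G)$ has finitely many orbits under the action of its automorphism group $\mathrm{Aut}(G)$. A ray is an infinite one-way path; two rays are equivalent if there are infinitely many disjoint paths between them, and an end is an equivalence class of rays. $\chi(G)$ denotes the chromatic number (minimum number of colors in a proper vertex-coloring). A vertex-coloring of $G$ is periodic if the subgroup of automorphisms of $G$ mapping every vertex to a vertex of the same color acts quasi-transitively on $V(G)$, i.e. $V(G)$ has finitely many orbits under this subgroup. *)

(* Defs.v *)
From Stdlib Require Import List Relations.
Import ListNotations.

Section Graphs.
Variable V : Type.
Variable adj : V -> V -> Prop.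

Definition simple_graph : Prop :=
  (forall x y, adj x y -> adj y x) /\ (forall x, ~ adj x x).

Definition locally_finite : Prop :=
  forall v, exists l : list V, forall w, adj v w -> In w l.

Definition connected : Prop :=
  forall u v, clos_refl_trans V adj u v.

Definition is_aut (f : V -> V) : Prop :=
  (forall x y, adj x y <-> adj (f x) (f y)) /\
  exists g : V -> V, (forall x, g (f x) = x) /\ (forall x, f (g x) = x).

Definition finitely_many_orbits (S : (V -> V) -> Prop) : Prop :=
  exists reps : list V, forall v, exists u f, In u reps /\ S f /\ f u = v.

Definition quasi_transitive : Prop := finitely_many_orbits is_aut.

Definition is_ray (r : nat -> V) : Prop :=
  (forall m n, r m = r n -> m = n) /\ (forall n, adj (r n) (r (S n))).

Fixpoint chain (l : list V) : Prop :=
  match l with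
  | x :: ((y :: _) as t) => adj x y /\ chain t
  | _ => True
  end.

Definition is_path (p : list V) : Prop := p <> [] /\ NoDup p /\ chain p.

Definition ray_path (r1 r2 : nat -> V) (p : list V) : Prop :=
  forall d : V, is_path p /\
    (exists m, hd d p = r1 m) /\ (exists n, last p d = r2 n).

Definition ray_equiv (r1 r2 : nat -> V) : Prop :=
  exists P : nat -> list V,
    (forall i, ray_path r1 r2 (P i)) /\
    (forall i j v, i <> j -> In v (P i) -> In v (P j) -> False).

Definition has_exactly_two_ends : Prop :=
  exists r1 r2, is_ray r1 /\ is_ray r2 /\ ~ ray_equiv r1 r2 /\
    forall r, is_ray r -> ray_equiv r r1 \/ ray_equiv r r2.

Definition proper_coloring (k : nat) (c : V -> nat) : Prop :=
  (forall v, c v < k) /\ (forall x y, adj x y -> c x <> c y).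

Definition chromatic_number (k : nat) : Prop :=
  (exists c, proper_coloring k c) /\
  (forall j c, proper_coloring j c -> k <= j).

Definition color_preserving_aut (c : V -> nat) (f : V -> V) : Prop :=
  is_aut f /\ forall v, c (f v) = c v.

Definition periodic_coloring (c : V -> nat) : Prop :=
  finitely_many_orbits (color_preserving_aut c).

End Graphs.

(* Main.v *)
Require Import Defs.
From Stdlib Require Import List Relations Lia ZArith Classical ClassicalEpsilon Arith.
Import ListNotations.

Section Main.
Variable V : Type.
Variable adj : V -> V -> Prop.
Hypothesis adj_sym : forall x y, adj x y -> adj y x.
Hypothesis adj_irr : forall x, ~ adj x x.
Hypothesis lf : locally_finite V adj.
Hypothesis gconn : connected V adj.

Definition Fin (P : V -> Prop) := exists L : list V, forall x, P x -> In x L.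

Lemma Fin_union_list {A : Type} (l : list A) (P : A -> V -> Prop) :
  (forall a, In a l -> Fin (P a)) -> Fin (fun v => exists a, In a l /\ P a v).
Proof.
  induction l as [|a l IH]; intros H.
  - exists []; intros x [b [[] _]].
  - destruct (H a (or_introl eq_refl)) as [L1 H1].
    destruct IH as [L2 H2]. { intros b Hb; apply H; right; exact Hb. }
    exists (L1 ++ L2); intros x [b [[<-|Hb] Hx]]; apply in_or_app.
    + left; auto.
    + right; apply H2; exists b; auto.
Qed.

Lemma Fin_sub (P Q : V -> Prop) : Fin Q -> (forall x, P x -> Q x) -> Fin P.
Proof. intros [L HL] H; exists L; auto. Qed.

Lemma Fin_or (P Q : V -> Prop) : Fin P -> Fin Q -> Fin (fun x => P x \/ Q x).
Proof.
  intros [L1 H1] [L2 H2]; exists (L1 ++ L2); intros x [Hx|Hx]; apply in_or_app; auto.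
Qed.

Lemma Fin_list (L : list V) : Fin (fun x => In x L).
Proof. exists L; auto. Qed.

Inductive reach : nat -> V -> V -> Prop :=
| reach0 x : reach 0 x x
| reachS n x y : reach n x y -> reach (S n) x y
| reachE n x y z : reach n x y -> adj y z -> reach (S n) x z.

Lemma reach_pre n x y z : adj x y -> reach n y z -> reach (S n) x z.
Proof.
  intros Hxy H; induction H.
  - eapply reachE; [constructor| exact Hxy].
  - apply reachS; auto.
  - eapply reachE; eauto.
Qed.

Lemma reach_sym n x y : reach n x y -> reach n y x.
Proof.
  induction 1.
  - constructor.
  - apply reachS; auto.
  - apply reach_pre with y; auto.
Qed.

Lemma reach_mono n m x y : n <= m -> reach n x y -> reach m x y.
Proof. induction 1; intros; auto. apply reachS; auto. Qed.

Lemma conn_reach x y : exists n, reach n x y.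
Proof.
  pose proof (gconn x y) as H. apply clos_rt_rtn1 in H.
  induction H as [|y z Hyz _ [n IH]].
  - exists 0; constructor.
  - exists (S n); eapply reachE; eauto.
Qed.

Lemma ball_fin n x : Fin (reach n x).
Proof.
  induction n.
  - exists [x]; intros y Hy; inversion Hy; subst; left; auto.
  - destruct IHn as [L HL].
    destruct (Fin_union_list L (fun a v => adj a v)) as [L2 H2].
    { intros a _. destruct (lf a) as [l Hl]. exists l; auto. }
    exists (L ++ L2); intros y Hy; inversion Hy; subst; apply in_or_app.
    + left; auto.
    + right; apply H2; eexists; split; eauto.
Qed.

Definition closed (S W : V -> Prop) := forall x y, S x -> adj x y -> S y \/ W y.

Lemma reach_stay S W n x y : closed S W -> reach n x y -> S x ->
  (forall w, reach n x w -> ~ W w) -> S y.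
Proof.
  intros cl H; induction H; intros Hx Hw; auto.
  - apply IHreach; auto. intros w Hr; apply Hw; apply reachS; auto.
  - assert (S y) by (apply IHreach; auto; intros w Hr; apply Hw; apply reachS; auto).
    destruct (cl y z H1 H0); auto. exfalso; eapply Hw; [eapply reachE; eauto| auto].
Qed.

Definition Aut (h h' : V -> V) :=
  (forall x y, adj x y <-> adj (h x) (h y)) /\ (forall x, h' (h x) = x) /\ (forall x, h (h' x) = x).

Lemma Aut_of_is_aut h : is_aut V adj h -> exists h', Aut h h'.
Proof. intros [H1 [g [H2 H3]]]; exists g; repeat split; auto; apply H1. Qed.

Lemma is_aut_of_Aut h h' : Aut h h' -> is_aut V adj h.
Proof. intros [H1 [H2 H3]]; split; auto; exists h'; auto. Qed.

Lemma Aut_inv h h' : Aut h h' -> Aut h' h.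
Proof.
  intros [H1 [H2 H3]]; split; [|split; auto].
  intros x y; split; intros Ha.
  - apply H1; rewrite !H3; auto.
  - apply H1 in Ha; rewrite !H3 in Ha; auto.
Qed.

Lemma Aut_comp h h' k k' : Aut h h' -> Aut k k' ->
  Aut (fun x => h (k x)) (fun x => k' (h' x)).
Proof.
  intros [H1 [H2 H3]] [K1 [K2 K3]]; repeat split; intros.
  - apply (proj1 (H1 _ _)), (proj1 (K1 _ _)); auto.
  - apply (proj2 (K1 _ _)), (proj2 (H1 _ _)); auto.
  - rewrite H2, K2; auto.
  - rewrite K3, H3; auto.
Qed.

Lemma Aut_adj h h' x y : Aut h h' -> adj x y -> adj (h x) (h y).
Proof. intros [H1 _] H; apply (proj1 (H1 _ _)); auto. Qed.

Lemma reach_aut h h' n x y : Aut h h' -> reach n x y -> reach n (h x) (h y).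
Proof.
  intros Ha; induction 1.
  - constructor.
  - apply reachS; auto.
  - eapply reachE; eauto. eapply Aut_adj; eauto.
Qed.


Definition cP (P : V -> Prop) := clos_refl_trans V (fun x y => adj x y /\ P x /\ P y).

Lemma cP_mono (P Q : V -> Prop) x y : (forall v, P v -> Q v) -> cP P x y -> cP Q x y.
Proof.
  intros H; induction 1.
  - apply rt_step; destruct H0 as [? [? ?]]; auto.
  - apply rt_refl.
  - eapply rt_trans; eauto.
Qed.

Lemma cP_sym P x y : cP P x y -> cP P y x.
Proof.
  induction 1.
  - apply rt_step; destruct H as [? [? ?]]; auto.
  - apply rt_refl.
  - eapply rt_trans; eauto.
Qed.

Lemma cP_in P x y : cP P x y -> P x -> P y.
Proof. induction 1; intros; auto. destruct H as [_ [_ ?]]; auto. Qed.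

Lemma last_default (l : list V) d d' : l <> [] -> last l d = last l d'.
Proof.
  induction l as [|a l IH]; intros H; [congruence|].
  destruct l as [|b l]; simpl; auto. apply IH; discriminate.
Qed.

Lemma last_app_ne (l1 l : list V) d : l <> [] -> last (l1 ++ l) d = last l d.
Proof.
  induction l1 as [|a l1 IH]; intros H; simpl; auto.
  destruct (l1 ++ l) eqn:E.
  - apply app_eq_nil in E; destruct E; congruence.
  - apply IH; auto.
Qed.

Lemma last_In (l : list V) d : l <> [] -> In (last l d) l.
Proof.
  induction l as [|a l IH]; intros H; [congruence|].
  destruct l as [|b l]; simpl; auto. right; apply IH; discriminate.
Qed.

Lemma chain_app_r (l1 l2 : list V) : chain V adj (l1 ++ l2) -> chain V adj l2.
Proof.
  induction l1 as [|a l1 IH]; simpl; auto.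
  intros H; apply IH. destruct (l1 ++ l2); auto. destruct H; auto.
Qed.

Lemma walk_to_path (P : V -> Prop) a b : cP P a b -> P a ->
  exists q, NoDup (a :: q) /\ chain V adj (a :: q) /\ last (a :: q) a = b /\
    forall v, In v (a :: q) -> P v.
Proof.
  intros H; apply clos_rt_rt1n in H. induction H as [a|a y b [Hay [Pa Py]] _ IH]; intros Ha.
  - exists []; split; [|split; [|split]]; simpl; auto.
    + constructor; [auto|constructor].
    + intros v [<-|[]]; auto.
  - destruct (IH Py) as [q [Hnd [Hch [Hl Hp]]]].
    destruct (classic (In a (y :: q))) as [Hin|Hnin].
    + apply in_split in Hin. destruct Hin as [l1 [l2 E]]. rewrite E in *.
      exists l2; split; [|split; [|split]].
      * apply NoDup_app_remove_l in Hnd; auto.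
      * apply chain_app_r in Hch; auto.
      * rewrite (last_default _ a y) by discriminate.
        rewrite <- (last_app_ne l1) by discriminate. auto.
      * intros v Hv; apply Hp; apply in_or_app; right; auto.
    + exists (y :: q); split; [|split; [|split]].
      * constructor; auto.
      * simpl; split; auto.
      * change (last (y :: q) a = b). rewrite (last_default _ a y) by discriminate; auto.
      * intros v [<-|Hv]; auto.
Qed.

Lemma cross S W (cl : closed S W) : forall q x, chain V adj (x :: q) -> S x ->
  ~ S (last (x :: q) x) -> exists v, In v (x :: q) /\ W v.
Proof.
  induction q as [|y q IH]; intros x Hch Hx Hl.
  - simpl in Hl; contradiction.
  - destruct Hch as [Hxy Hch].
    destruct (cl x y Hx Hxy) as [Hy|Hy].
    + destruct (IH y Hch Hy) as [v [Hv Wv]].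
      * change (~ S (last (y :: q) x)) in Hl. rewrite (last_default _ x y) in Hl by discriminate; auto.
      * exists v; split; auto; right; auto.
    + exists y; split; auto; right; left; auto.
Qed.

Lemma remove_ex {A : Type} (L : list A) a : In a L ->
  exists L', length L' < length L /\ forall x, In x L -> x <> a -> In x L'.
Proof.
  induction L as [|b L IH]; intros H; [destruct H|].
  destruct (classic (b = a)) as [<-|Hne].
  - exists L; split; simpl; [lia|]. intros x [<-|Hx] Hxa; [congruence|auto].
  - destruct H as [->|H]; [congruence|].
    destruct (IH H) as [L' [Hlen HL']]. exists (b :: L'); split; simpl; [lia|].
    intros x [<-|Hx] Hxa; [left; auto|right; auto].
Qed.

Lemma php {A : Type} : forall n (L : list A) (f : nat -> A), length L <= n ->
  (forall k, In (f k) L) -> exists i j, i < j /\ f i = f j.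
Proof.
  induction n; intros L f Hl Hf.
  - destruct L; [destruct (Hf 0)| simpl in Hl; lia].
  - destruct (classic (exists j, 0 < j /\ f j = f 0)) as [[j [Hj E]]|Hno].
    + exists 0, j; auto.
    + destruct (remove_ex L (f 0) (Hf 0)) as [L' [Hlen HL']].
      destruct (IHn L' (fun k => f (S k))) as [i [j [Hij E]]]; [lia| |].
      * intros k; apply HL'; auto. intros E; apply Hno; exists (S k); split; [lia|auto].
      * exists (S i), (S j); split; [lia|auto].
Qed.

Lemma php_rel {A : Type} (L : list A) (R : nat -> A -> Prop) :
  (forall n, exists x, In x L /\ R n x) -> exists i j x, i < j /\ R i x /\ R j x.
Proof.
  intros H. destruct (choice _ H) as [f Hf].
  destruct (php (length L) L f) as [i [j [Hij E]]]; auto.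
  - intros k; apply Hf.
  - exists i, j, (f i); split; auto; split; [apply Hf|rewrite E; apply Hf].
Qed.

Lemma disjoint_family (P : nat -> list V) (L : list V) :
  (forall i, exists v, In v L /\ In v (P i)) ->
  (forall i j v, i <> j -> In v (P i) -> In v (P j) -> False) -> False.
Proof.
  intros H Hd. destruct (php_rel L (fun i v => In v (P i)) H) as [i [j [v [Hij [H1 H2]]]]].
  apply (Hd i j v); auto; lia.
Qed.

Lemma sep S W LW (cl : closed S W) (fw : forall v, W v -> In v LW) rho sig N N' :
  (forall n, N <= n -> S (rho n)) -> (forall n, N' <= n -> ~ S (sig n)) ->
  ~ ray_equiv V adj rho sig.
Proof.
  intros Hr Hs [P [HP Hd]].
  apply (disjoint_family P (LW ++ map rho (seq 0 N) ++ map sig (seq 0 N'))); auto.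
  intros i. destruct (HP i (rho 0)) as [[Hne [Hnd Hch]] [[m Hm] [n Hn]]].
  destruct (P i) as [|x q] eqn:EP; [congruence|]. simpl in Hm.
  destruct (Nat.lt_ge_cases m N) as [Hm'|Hm'].
  { exists x; split; [|left; auto]. apply in_or_app; right; apply in_or_app; left.
    rewrite Hm; apply in_map, in_seq; lia. }
  destruct (Nat.lt_ge_cases n N') as [Hn'|Hn'].
  { exists (last (x :: q) (rho 0)); split; [|apply last_In; discriminate].
    apply in_or_app; right; apply in_or_app; right.
    rewrite Hn; apply in_map, in_seq; lia. }
  destruct (cross S W cl q x Hch) as [v [Hv Wv]].
  - rewrite Hm; auto.
  - rewrite (last_default _ x (rho 0)) by discriminate. rewrite Hn; auto.
  - exists v; split; auto. apply in_or_app; left; auto.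
Qed.


Definition Rr (S : V -> Prop) (v : V) (rest : list V) := cP (fun u => S u /\ ~ In u rest) v.

Lemma konig_step S v rest : S v -> ~ In v rest -> ~ Fin (Rr S v rest) ->
  exists v', adj v v' /\ S v' /\ ~ In v' (v :: rest) /\ ~ Fin (Rr S v' (v :: rest)).
Proof.
  intros Sv Hv Hinf. apply NNPP; intros Hno. apply Hinf.
  destruct (lf v) as [Nv HNv].
  set (Q := fun v' => adj v v' /\ S v' /\ ~ In v' (v :: rest)).
  assert (Hc : forall w, Rr S v rest w -> w = v \/
     exists v', In v' Nv /\ Q v' /\ Rr S v' (v :: rest) w).
  { intros w H. unfold Rr, cP in H. apply clos_rt_rtn1 in H.
    induction H as [|y w [Hyw [Py Pw]] _ IH]; [left; auto|].
    destruct (classic (w = v)) as [->|Hwv]; [left; auto|right].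
    destruct IH as [->|[v' [Hv' [Qv' Hr]]]].
    - exists w; split; [apply HNv; auto|]. split.
      + split; [auto|split; [apply Pw|]]. intros [E|E]; [congruence|apply Pw; auto].
      + apply rt_refl.
    - exists v'; split; [auto|split; [auto|]].
      unfold Rr, cP. eapply rt_trans; [exact Hr|]. apply rt_step.
      split; [auto|split].
      + apply (cP_in _ _ _ Hr). destruct Qv' as [_ [? ?]]; split; auto.
      + split; [apply Pw|]. intros [E|E]; [congruence|apply Pw; auto]. }
  destruct (Fin_union_list Nv (fun a w => Q a /\ Rr S a (v :: rest) w)) as [L HL].
  { intros a _. destruct (classic (Q a)) as [Qa|Qa].
    - destruct (classic (Fin (Rr S a (v :: rest)))) as [F|F].
      + destruct F as [L HL]; exists L; intros x [_ Hx]; auto.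
      + exfalso; apply Hno; exists a; destruct Qa as [? [? ?]]; auto.
    - exists []; intros x [Hx _]; contradiction. }
  exists (v :: L); intros w Hw. destruct (Hc w Hw) as [->|[v' [H1 [H2 H3]]]]; [left; auto|].
  right; apply HL; exists v'; auto.
Qed.

Lemma konig S W : closed S W -> Fin W -> ~ Fin S ->
  exists rho, is_ray V adj rho /\ forall n, S (rho n).
Proof.
  intros cl [LW HW] Hinf.
  assert (Hs0 : exists s0, S s0).
  { apply NNPP; intros H; apply Hinf; exists []; intros x Hx; apply H; eauto. }
  destruct Hs0 as [s0 Ss0].
  destruct (Fin_union_list LW (fun w v => adj w v)) as [LN HLN].
  { intros a _; destruct (lf a) as [l Hl]; exists l; auto. }
  assert (Hx0 : forall v, S v -> exists x, In x (s0 :: LN) /\ S x /\ cP S x v).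
  { intros v Sv. pose proof (gconn s0 v) as H. apply clos_rt_rtn1 in H.
    induction H as [|y v Hyv _ IH].
    - exists s0; split; [left; auto|split; [auto|apply rt_refl]].
    - destruct (classic (S y)) as [Sy|Sy].
      + destruct (IH Sy) as [x [H1 [H2 H3]]]. exists x; split; [auto|split; [auto|]].
        eapply rt_trans; [exact H3|]. apply rt_step; auto.
      + destruct (cl v y Sv (adj_sym _ _ Hyv)) as [|Wy]; [contradiction|].
        exists v; split; [right; apply HLN; exists y; split; auto|split; [auto|apply rt_refl]]. }
  assert (Hx : exists x, S x /\ ~ Fin (cP S x)).
  { apply NNPP; intros Hno. apply Hinf.
    destruct (Fin_union_list (s0 :: LN) (fun a v => S a /\ cP S a v)) as [L HL].
    - intros a _. destruct (classic (S a)) as [Sa|Sa].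
      + destruct (classic (Fin (cP S a))) as [[L HL]|F].
        * exists L; intros x [_ Hx]; auto.
        * exfalso; apply Hno; eauto.
      + exists []; intros x [Hx _]; contradiction.
    - exists L; intros v Sv. apply HL. destruct (Hx0 v Sv) as [x [H1 [H2 H3]]]; eauto. }
  destruct Hx as [x [Sx Hxinf]].
  set (next := fun p : list V => epsilon (inhabits s0)
     (fun v' => adj (hd s0 p) v' /\ S v' /\ ~ In v' p /\ ~ Fin (Rr S v' p))).
  set (seqK := fix seqK n := match n with 0 => [x] | S n => next (seqK n) :: seqK n end).
  assert (Inv : forall n, exists v rest, seqK n = v :: rest /\ S v /\ ~ In v rest /\ ~ Fin (Rr S v rest)).
  { induction n.
    - exists x, []; split; [auto|split; [auto|split; [auto|]]].
      intros F; apply Hxinf. eapply Fin_sub; [exact F|]. intros y Hy.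
      eapply cP_mono; [|exact Hy]. simpl; intros u Su; split; auto.
    - destruct IHn as [v [rest [E [Sv [Hv Hf]]]]].
      destruct (konig_step S v rest Sv Hv Hf) as [v' Hv'].
      assert (Hsp := epsilon_spec (inhabits s0)
        (fun v' => adj (hd s0 (seqK n)) v' /\ S v' /\ ~ In v' (seqK n) /\ ~ Fin (Rr S v' (seqK n)))).
      rewrite E in Hsp. simpl in Hsp. destruct Hsp as [H1 [H2 [H3 H4]]]; [exists v'; auto|].
      exists (next (seqK n)), (seqK n). simpl. unfold next at 1 3. rewrite E. simpl. auto. }
  set (rho := fun n => hd s0 (seqK n)).
  assert (Hin : forall n m, m <= n -> In (rho m) (seqK n)).
  { induction n; intros m Hm.
    - assert (m = 0) by lia; subst. simpl; auto.
    - destruct (Nat.eq_dec m (Datatypes.S n)) as [->|Hne].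
      + unfold rho; simpl; auto.
      + simpl; right; apply IHn; lia. }
  exists rho; split; [split|].
  - assert (Hlt : forall m n, m < n -> rho m <> rho n).
    { intros m n Hmn E. destruct n; [lia|].
      destruct (Inv (Datatypes.S n)) as [v [rest [E1 [_ [Hv _]]]]].
      simpl in E1. injection E1; intros E2 E3.
      apply Hv. rewrite <- E2. unfold rho in E. simpl in E. rewrite <- E3, <- E.
      apply Hin; lia. }
    intros m n E. destruct (lt_eq_lt_dec m n) as [[H|H]|H]; auto.
    + exfalso; eapply Hlt; eauto.
    + exfalso; eapply Hlt; eauto.
  - intros n. destruct (Inv n) as [v [rest [E [_ [Hv _]]]]].
    assert (Hsp := epsilon_spec (inhabits s0)
        (fun v' => adj (hd s0 (seqK n)) v' /\ S v' /\ ~ In v' (seqK n) /\ ~ Fin (Rr S v' (seqK n)))).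
    destruct Hsp as [H1 _].
    + destruct (Inv n) as [v0 [rest0 [E0 [S0 [N0 F0]]]]].
      destruct (konig_step S v0 rest0 S0 N0 F0) as [v' Hv']. exists v'. rewrite E0; simpl; auto.
    + unfold rho; simpl. exact H1.
  - intros n. destruct (Inv n) as [v [rest [E [Sv _]]]]. unfold rho; rewrite E; auto.
Qed.


Lemma tail_avoid_list rho (L : list V) : is_ray V adj rho -> exists N, forall n, N <= n -> ~ In (rho n) L.
Proof.
  intros [Hinj _]. induction L as [|a L IH].
  - exists 0; intros n _ [].
  - destruct IH as [N HN].
    destruct (classic (exists m, rho m = a)) as [[m Hm]|Hno].
    + exists (Nat.max N (Datatypes.S m)); intros n Hn [E|E].
      * assert (n = m) by (apply Hinj; congruence). lia.
      * apply (HN n); auto; lia.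
    + exists N; intros n Hn [E|E]; [apply Hno; eauto|apply (HN n); auto].
Qed.

Lemma tail_avoid rho W : is_ray V adj rho -> Fin W -> exists N, forall n, N <= n -> ~ W (rho n).
Proof.
  intros Hr [L HL]. destruct (tail_avoid_list rho L Hr) as [N HN].
  exists N; intros n Hn Hw; apply (HN n Hn); auto.
Qed.

Lemma tail_stay S W rho N : is_ray V adj rho -> closed S W ->
  (forall n, N <= n -> ~ W (rho n)) -> S (rho N) -> forall n, N <= n -> S (rho n).
Proof.
  intros [_ Hadj] cl Hw HS n Hn. induction Hn; auto.
  destruct (cl _ _ IHHn (Hadj m)) as [H|H]; auto. exfalso; apply (Hw (Datatypes.S m)); auto.
Qed.

Lemma unif_bound {A : Type} (P : nat -> A -> Prop) :
  (forall n m a, n <= m -> P n a -> P m a) -> forall l : list A,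
  (forall a, In a l -> exists n, P n a) -> exists n, forall a, In a l -> P n a.
Proof.
  intros Hm l; induction l as [|b l IH]; intros H.
  - exists 0; intros a [].
  - destruct (H b (or_introl eq_refl)) as [n1 H1].
    destruct IH as [n2 H2]; [intros a Ha; apply H; right; auto|].
    exists (Nat.max n1 n2); intros a [<-|Ha].
    + apply Hm with n1; auto; lia.
    + apply Hm with n2; auto; lia.
Qed.

Section Ends.
Variables r1 r2 : nat -> V.
Hypothesis r1ray : is_ray V adj r1.
Hypothesis r2ray : is_ray V adj r2.
Hypothesis r12 : ~ ray_equiv V adj r1 r2.
Hypothesis ends : forall r, is_ray V adj r -> ray_equiv V adj r r1 \/ ray_equiv V adj r r2.
Hypothesis qt : quasi_transitive V adj.

Lemma fin_sep S W : closed S W -> Fin W ->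
  (exists N, forall n, N <= n -> ~ S (r1 n)) -> (exists N, forall n, N <= n -> ~ S (r2 n)) -> Fin S.
Proof.
  intros cl HW [N1 H1] [N2 H2]. apply NNPP; intros Hinf.
  destruct (konig S W cl HW Hinf) as [rho [Hr HS]].
  destruct HW as [LW HLW].
  destruct (ends rho Hr) as [E|E]; revert E.
  - apply (sep S W LW cl HLW rho r1 0 N1); auto.
  - apply (sep S W LW cl HLW rho r2 0 N2); auto.
Qed.

Lemma far S W Y rho N : closed S W -> Fin W -> Fin Y -> is_ray V adj rho ->
  (forall n, N <= n -> S (rho n)) -> exists h h', Aut h h' /\ forall y, Y y -> S (h y).
Proof.
  intros cl [LW HLW] [LY HLY] Hr HS.
  destruct qt as [reps Hreps].
  destruct (unif_bound (fun n u => forall y, In y LY -> reach n u y)) with (l := reps)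
    as [r0 Hr0].
  { intros n m a Hnm H y Hy; apply reach_mono with n; auto. }
  { intros u _. apply unif_bound.
    - intros n m a Hnm H; apply reach_mono with n; auto.
    - intros y _; apply conn_reach. }
  destruct (Fin_union_list LW (fun w v => reach r0 w v)) as [BW HBW].
  { intros a _; apply ball_fin. }
  destruct (tail_avoid_list rho BW Hr) as [N1 HN1].
  set (n := Nat.max N N1).
  destruct (Hreps (rho n)) as [u [f [Hu [Hf Efu]]]].
  destruct (Aut_of_is_aut f Hf) as [f' Hff].
  exists f, f'; split; auto. intros y Hy.
  assert (Hry : reach r0 (f u) (f y)) by (apply reach_aut with f'; auto).
  rewrite Efu in Hry.
  apply (reach_stay S W r0 (rho n)); auto.
  - apply HS; unfold n; lia.
  - intros w Hw Ww. apply (HN1 n); [unfold n; lia|]. apply HBW; exists w; split; auto.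
    apply reach_sym; auto.
Qed.

Lemma greedy : exists F : list V, forall p, ray_path V adj r1 r2 p -> exists v, In v p /\ In v F.
Proof.
  apply NNPP; intros Hno.
  assert (H : forall F : list V, exists p, ray_path V adj r1 r2 p /\ forall v, In v p -> ~ In v F).
  { intros F. apply NNPP; intros H2. apply Hno. exists F. intros p Hp.
    apply NNPP; intros H3. apply H2. exists p; split; auto. intros v Hv Hv'; apply H3; eauto. }
  set (nextp := fun F : list V => epsilon (inhabits (@nil V))
     (fun p => ray_path V adj r1 r2 p /\ forall v, In v p -> ~ In v F)).
  assert (Hn : forall F, ray_path V adj r1 r2 (nextp F) /\ forall v, In v (nextp F) -> ~ In v F).
  { intros F; apply epsilon_spec; apply H. }
  set (acc := fix acc n := match n with 0 => [] | Datatypes.S n => acc n ++ nextp (acc n) end).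
  assert (Hmono : forall i j v, i <= j -> In v (acc i) -> In v (acc j)).
  { intros i j v Hij; induction Hij; auto. intros Hv; simpl; apply in_or_app; left; auto. }
  assert (Hsub : forall i j v, i < j -> In v (nextp (acc i)) -> In v (acc j)).
  { intros i j v Hij Hv. apply Hmono with (Datatypes.S i); auto. simpl; apply in_or_app; right; auto. }
  apply r12. exists (fun i => nextp (acc i)); split.
  - intros i; apply Hn.
  - intros i j v Hij Hi Hj. destruct (Nat.lt_gt_cases i j) as [[Hlt|Hlt] _]; auto.
    + apply (proj2 (Hn (acc j)) v Hj). apply Hsub with i; auto.
    + apply (proj2 (Hn (acc i)) v Hi). apply Hsub with j; auto.
Qed.

Lemma sep_walk (F : list V) : (forall p, ray_path V adj r1 r2 p -> exists v, In v p /\ In v F) ->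
  forall m n, ~ In (r1 m) F -> cP (fun u => ~ In u F) (r1 m) (r2 n) -> False.
Proof.
  intros HF m n Hm Hc. destruct (walk_to_path _ _ _ Hc Hm) as [q [Hnd [Hch [Hl Hp]]]].
  destruct (HF (r1 m :: q)) as [v [Hv Hv']].
  - intros d; split; [split; [discriminate|split; auto]|split].
    + exists m; auto.
    + exists n. rewrite (last_default _ d (r1 m)) by discriminate; auto.
  - exact (Hp v Hv Hv').
Qed.


Lemma cP_reach n x y : reach n x y -> cP (reach n x) x y.
Proof.
  induction 1.
  - apply rt_refl.
  - eapply cP_mono; [|exact IHreach]. intros v Hv; apply reachS; auto.
  - eapply rt_trans; [eapply cP_mono; [|exact IHreach]; intros v Hv; apply reachS; auto|].
    apply rt_step; split; [auto|split; [apply reachS; auto|eapply reachE; eauto]].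
Qed.

Lemma compl_conn C Zc z0 : closed C Zc -> (forall v, Zc v -> ~ C v) ->
  (forall v, Zc v -> cP Zc z0 v) -> Zc z0 -> forall v, ~ C v -> cP (fun u => ~ C u) z0 v.
Proof.
  intros cl HZ Hc Hz0 v Hv. pose proof (gconn z0 v) as H. apply clos_rt_rtn1 in H.
  induction H as [|y v Hyv _ IH].
  - apply rt_refl.
  - destruct (classic (C y)) as [Cy|Cy].
    + destruct (cl y v Cy Hyv) as [|Zv]; [contradiction|].
      eapply cP_mono; [|apply Hc; auto]. auto.
    + eapply rt_trans; [apply IH; auto|]. apply rt_step; auto.
Qed.

Lemma side (P : V -> Prop) z0 S W : (forall v, P v -> cP P z0 v) -> closed S W ->
  (forall v, P v -> ~ W v) -> forall z, P z -> S z -> forall v, P v -> S v.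
Proof.
  intros Hc cl HW z Pz Sz v Pv.
  assert (H : cP P z v) by (eapply rt_trans; [apply cP_sym, Hc; auto|apply Hc; auto]).
  apply clos_rt_rtn1 in H. induction H as [|y w [Hyw [Py Pw]] _ IH]; auto.
  destruct (cl y w (IH Py) Hyw) as [|Ww]; auto. exfalso; apply (HW w); auto.
Qed.

Lemma closed_img S W h h' : Aut h h' -> closed S W ->
  closed (fun v => S (h' v)) (fun v => W (h' v)).
Proof.
  intros Ha cl x y Sx Hxy. apply (cl _ _ Sx). apply (Aut_adj h' h); auto. apply Aut_inv; auto.
Qed.

Lemma cP_img P h h' x y : Aut h h' -> cP P x y -> cP (fun v => P (h' v)) (h x) (h y).
Proof.
  intros Ha; induction 1 as [x y [Hxy [Px Py]]| |].
  - apply rt_step; split; [eapply Aut_adj; eauto|].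
    destruct Ha as [_ [H2 _]]; rewrite !H2; auto.
  - apply rt_refl.
  - eapply rt_trans; eauto.
Qed.

Lemma Fin_img K h h' : Aut h h' -> Fin K -> Fin (fun v => K (h' v)).
Proof.
  intros [_ [_ H3]] [L HL]; exists (map h L); intros v Hv.
  rewrite <- (H3 v); apply in_map; auto.
Qed.

Lemma ray_aut h h' r : Aut h h' -> is_ray V adj r -> is_ray V adj (fun n => h (r n)).
Proof.
  intros Ha [Hi Hadj]; split.
  - intros m n E. apply Hi. destruct Ha as [_ [H2 _]]. rewrite <- (H2 (r m)), <- (H2 (r n)), E; auto.
  - intros n; eapply Aut_adj; eauto.
Qed.

Lemma iter_adj f f' n x y : Aut f f' -> adj x y -> adj (Nat.iter n f x) (Nat.iter n f y).
Proof. intros Ha H; induction n; simpl; auto. eapply Aut_adj; eauto. Qed.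

Lemma iter_shift (f : V -> V) n x : Nat.iter n f (f x) = Nat.iter (Datatypes.S n) f x.
Proof. induction n; simpl; auto. rewrite IHn; auto. Qed.

Lemma iter_cancel f f' n x : Aut f f' -> Nat.iter n f' (Nat.iter n f x) = x.
Proof.
  intros Ha; induction n; [reflexivity|].
  rewrite <- iter_shift. change (Nat.iter (Datatypes.S n) f x) with (f (Nat.iter n f x)).
  destruct Ha as [_ [H2 _]]. rewrite H2; auto.
Qed.

Lemma iter_plus (f : V -> V) n m x : Nat.iter (n + m) f x = Nat.iter n f (Nat.iter m f x).
Proof. induction n; simpl; auto. rewrite IHn; auto. Qed.

Lemma push f f' (T U : V -> Prop) : Aut f f' -> (forall v, T v -> U (f v)) -> (forall v, U v -> T v) ->
  (forall x y, U x -> adj x y -> T y) -> forall n x y, reach n x y -> T x -> T (Nat.iter n f y).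
Proof.
  intros Ha H1 H2 H3 n x y Hr Tx; induction Hr; simpl; auto.
  apply (H3 (f (Nat.iter n f y))).
  - apply H1; auto.
  - eapply Aut_adj; eauto. apply iter_adj with f'; auto.
Qed.

Lemma structure_thm : exists (sg g : V -> V) (D : V -> Prop), Aut sg g /\ Fin D /\
  (forall v, exists d k, D d /\ (v = Nat.iter k sg d \/ v = Nat.iter k g d)) /\
  (forall d d' k, D d -> D d' -> Nat.iter (Datatypes.S k) sg d' = d -> False).
Proof.
  destruct greedy as [F HF].
  set (f0 := r1 0).
  destruct (unif_bound (fun n a => reach n f0 a)) with (l := F) as [R HR].
  { intros n m a Hnm H; apply reach_mono with n; auto. }
  { intros a _; apply conn_reach. }
  set (Z := reach R f0).
  assert (FZ : Fin Z) by apply ball_fin.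
  assert (Zconn : forall v, Z v -> cP Z f0 v) by (intros v Hv; apply cP_reach; auto).
  destruct (tail_avoid r1 Z r1ray FZ) as [N1 HN1].
  destruct (tail_avoid r2 Z r2ray FZ) as [N2 HN2].
  set (A := cP (fun u => ~ Z u) (r1 N1)).
  set (B := cP (fun u => ~ Z u) (r2 N2)).
  assert (AZ : forall v, A v -> ~ Z v) by (intros v Hv; apply (cP_in _ _ _ Hv); apply HN1; auto).
  assert (BZ : forall v, B v -> ~ Z v) by (intros v Hv; apply (cP_in _ _ _ Hv); apply HN2; auto).
  assert (clA : closed A Z).
  { intros x y Ax Hxy. destruct (classic (Z y)) as [Zy|Zy]; [right; auto|left].
    eapply rt_trans; [exact Ax|]. apply rt_step; split; [auto|split; auto]. }
  assert (clB : closed B Z).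
  { intros x y Bx Hxy. destruct (classic (Z y)) as [Zy|Zy]; [right; auto|left].
    eapply rt_trans; [exact Bx|]. apply rt_step; split; [auto|split; auto]. }
  assert (AB : forall v, A v -> B v -> False).
  { intros v Av Bv. apply (sep_walk F HF N1 N2).
    - intros Hin; apply (HN1 N1); [auto|unfold Z; apply HR; auto].
    - eapply cP_mono; [|eapply rt_trans; [exact Av|apply cP_sym; exact Bv]].
      intros u Hu Hin; apply Hu; unfold Z; apply HR; auto. }
  assert (tA : forall n, N1 <= n -> A (r1 n)).
  { apply (tail_stay A Z r1 N1 r1ray clA HN1). apply rt_refl. }
  assert (tB : forall n, N2 <= n -> B (r2 n)).
  { apply (tail_stay B Z r2 N2 r2ray clB HN2). apply rt_refl. }
  set (K := fun v => ~ A v /\ ~ B v).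
  assert (ZK : forall v, Z v -> K v).
  { intros v Zv; split; intros H; [apply (AZ v)|apply (BZ v)]; auto. }
  assert (FK : Fin K).
  { apply Fin_sub with (fun v => (K v /\ ~ Z v) \/ Z v).
    - apply Fin_or; auto. apply (fin_sep _ Z); auto.
      + intros x y [[nAx nBx] nZx] Hxy. destruct (classic (Z y)) as [Zy|Zy]; [right; auto|left].
        split; [split|auto]; intros H.
        * destruct (clA y x H (adj_sym _ _ Hxy)); contradiction.
        * destruct (clB y x H (adj_sym _ _ Hxy)); contradiction.
      + exists N1; intros n Hn [[H _] _]; apply H; apply tA; auto.
      + exists N2; intros n Hn [[_ H] _]; apply H; apply tB; auto.
    - intros v Kv; destruct (classic (Z v)); auto. }
  assert (Zf0 : Z f0) by (apply (reach_mono 0); [lia|constructor]).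
  assert (Kf0 : K f0) by (apply ZK; auto).
  assert (Kconn : forall v, K v -> cP K f0 v).
  { intros v Kv.
    assert (H : cP (fun u => ~ (A u \/ B u)) f0 v).
    { assert (clC : closed (fun u => A u \/ B u) Z).
      { intros x y [Ax|Bx] Hxy.
        + destruct (clA x y Ax Hxy); [left; left|right]; auto.
        + destruct (clB x y Bx Hxy); [left; right|right]; auto. }
      assert (ZC : forall u, Z u -> ~ (A u \/ B u)).
      { intros u Zu [Au|Bu]; [apply (AZ u)|apply (BZ u)]; auto. }
      apply (compl_conn _ Z f0 clC ZC Zconn Zf0 v).
      intros [Av|Bv]; destruct Kv as [K1 K2]; auto. }
    eapply cP_mono; [|exact H]. intros u Hu; split; intros H'; apply Hu; auto. }
  assert (clAK : closed A K).
  { intros x y Ax Hxy; destruct (clA x y Ax Hxy); auto. }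
  assert (clBK : closed B K).
  { intros x y Bx Hxy; destruct (clB x y Bx Hxy); auto. }
  assert (Tconn : forall v, ~ A v -> cP (fun u => ~ A u) f0 v).
  { apply (compl_conn A K f0 clAK (fun u Ku => proj1 Ku) Kconn Kf0). }
  assert (T'conn : forall v, ~ B v -> cP (fun u => ~ B u) f0 v).
  { apply (compl_conn B K f0 clBK (fun u Ku => proj2 Ku) Kconn Kf0). }
  assert (part : forall v, A v \/ K v \/ B v).
  { intros v. destruct (classic (A v)); auto. destruct (classic (B v)); auto. right; left; split; auto. }
  assert (orient : forall h h', Aut h h' -> (forall k, K k -> A (h k)) ->
     (forall v, ~ A v -> B (h' v)) \/ (forall v, ~ A v -> A (h' v))).
  { intros h h' Ha Hh.
    assert (HW : forall v, ~ A v -> ~ K (h' v)).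
    { intros v Hv Kv. apply Hv. apply Hh in Kv. destruct Ha as [_ [_ H3]]. rewrite H3 in Kv; auto. }
    destruct (part (h' f0)) as [H|[H|H]].
    - right. exact (side (fun u => ~ A u) f0 (fun v => A (h' v)) (fun v => K (h' v))
        Tconn (closed_img _ _ h h' Ha clAK) HW f0 (proj1 Kf0) H).
    - exfalso; apply (HW f0 (proj1 Kf0)); auto.
    - left. exact (side (fun u => ~ A u) f0 (fun v => B (h' v)) (fun v => K (h' v))
        Tconn (closed_img _ _ h h' Ha clBK) HW f0 (proj1 Kf0) H). }
  assert (Hsig : exists sg g, Aut sg g /\ forall v, ~ A v -> B (sg v)).
  { destruct (far A K K r1 N1 clAK FK FK r1ray tA) as [h1 [h1' [Ha1 Hh1]]].
    destruct (orient h1 h1' Ha1 Hh1) as [O1|O1].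
    { exists h1', h1; split; auto. apply Aut_inv; auto. }
    assert (Ha1' := Ha1). destruct Ha1' as [_ [E12 E13]].
    assert (C1 : forall v, ~ A v -> A (h1 v)).
    { intros v Hv. apply NNPP; intros H. apply O1 in H. rewrite E12 in H. contradiction. }
    set (S2 := fun v => A v /\ B (h1' v)).
    set (W2 := fun v => K v \/ K (h1' v)).
    assert (clS2 : closed S2 W2).
    { intros x y [Ax Bx] Hxy.
      destruct (clAK x y Ax Hxy) as [Ay|Ky]; [|right; left; auto].
      destruct (closed_img B K h1 h1' Ha1 clBK x y Bx Hxy) as [By|Ky]; [|right; right; auto].
      left; split; auto. }
    assert (FW2 : Fin W2) by (apply Fin_or; auto; apply Fin_img with h1; auto).
    assert (ray2 := ray_aut h1 h1' r2 Ha1 r2ray).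
    destruct (far S2 W2 K (fun n => h1 (r2 n)) N2 clS2 FW2 FK ray2) as [h2 [h2' [Ha2 Hh2]]].
    { intros n Hn; split.
      - apply C1. intros H; apply (AB (r2 n)); auto.
      - unfold S2; simpl. rewrite E12; auto. }
    destruct (orient h2 h2' Ha2 (fun k Kk => proj1 (Hh2 k Kk))) as [O2|O2].
    { exists h2', h2; split; auto. apply Aut_inv; auto. }
    assert (Ha2' := Ha2). destruct Ha2' as [_ [E22 E23]].
    assert (c3conn : forall v, ~ B (h1' v) -> cP (fun v => ~ B (h1' v)) (h1 f0) v).
    { intros v Pv. pose proof (cP_img _ h1 h1' f0 (h1' v) Ha1 (T'conn (h1' v) Pv)) as H.
      rewrite E13 in H; auto. }
    assert (c3W : forall v, ~ B (h1' v) -> ~ K (h2' v)).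
    { intros v Pv Kv. apply Hh2 in Kv. rewrite E23 in Kv. apply Pv, Kv. }
    assert (c3z : ~ B (h1' f0)).
    { intros H. apply (AB (h1' f0)); auto. apply O1. apply Kf0. }
    assert (C3 : forall v, ~ B (h1' v) -> A (h2' v)).
    { exact (side _ (h1 f0) (fun v => A (h2' v)) (fun v => K (h2' v)) c3conn
        (closed_img _ _ h2 h2' Ha2 clAK) c3W f0 c3z (O2 f0 (proj1 Kf0))). }
    assert (c4conn : forall v, ~ A (h2' v) -> cP (fun v => ~ A (h2' v)) (h2 f0) v).
    { intros v Pv. pose proof (cP_img _ h2 h2' f0 (h2' v) Ha2 (Tconn (h2' v) Pv)) as H.
      rewrite E23 in H; auto. }
    assert (c4W : forall v, ~ A (h2' v) -> ~ K (h1' v)).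
    { intros v Pv Kv. apply Pv. apply C3. apply Kv. }
    assert (c4z : ~ A (h2' (h2 f0))) by (rewrite E22; apply Kf0).
    assert (C4 : forall v, ~ A (h2' v) -> B (h1' v)).
    { exact (side _ (h2 f0) (fun v => B (h1' v)) (fun v => K (h1' v)) c4conn
        (closed_img _ _ h1 h1' Ha1 clBK) c4W (h2 f0) c4z (proj2 (Hh2 f0 Kf0))). }
    exists (fun v => h1' (h2 v)), (fun v => h2' (h1 v)); split.
    - apply Aut_comp; auto. apply Aut_inv; auto.
    - intros v Hv. apply C4. rewrite E22; auto. }
  destruct Hsig as [sg [g [Hag Hs]]].
  assert (Hag' := Hag). destruct Hag' as [_ [Eg2 Eg3]].
  assert (Hg : forall v, ~ B v -> A (g v)).
  { intros v Hv. apply NNPP; intros H. apply Hs in H. rewrite Eg3 in H. contradiction. }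
  assert (UB : forall x y, B x -> adj x y -> ~ A y).
  { intros x y Bx Hxy Ay. destruct (clAK y x Ay (adj_sym _ _ Hxy)) as [Ax|Kx].
    - apply (AB x); auto.
    - exact (proj2 Kx Bx). }
  assert (UA : forall x y, A x -> adj x y -> ~ B y).
  { intros x y Ax Hxy By. destruct (clBK y x By (adj_sym _ _ Hxy)) as [Bx|Kx].
    - apply (AB x); auto.
    - exact (proj1 Kx Ax). }
  assert (P1 : forall v, exists n, ~ A (Nat.iter n sg v)).
  { intros v. destruct (conn_reach f0 v) as [n Hr]. exists n.
    exact (push sg g (fun u => ~ A u) B Hag Hs (fun u Bu Au => AB u Au Bu) UB n f0 v Hr (proj1 Kf0)). }
  assert (P2 : forall v, exists n, A (Nat.iter n g v)).
  { intros v. destruct (conn_reach f0 v) as [n Hr]. exists (Datatypes.S n). simpl.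
    apply Hg. exact (push g sg (fun u => ~ B u) A (Aut_inv _ _ Hag) Hg (fun u Au Bu => AB u Au Bu) UA n f0 v Hr (proj2 Kf0)). }
  set (D := fun v => ~ A v /\ A (g v)).
  assert (L1 : forall n v, A v -> ~ A (Nat.iter n sg v) ->
     exists k, 1 <= k <= n /\ D (Nat.iter k sg v)).
  { induction n; intros v Av H; [simpl in H; contradiction|].
    destruct (classic (A (sg v))) as [As|As].
    - rewrite <- iter_shift in H. destruct (IHn (sg v) As H) as [k [Hk Dk]].
      exists (Datatypes.S k); split; [lia|]. rewrite <- iter_shift; auto.
    - exists 1; split; [lia|]. split; simpl; auto. rewrite Eg2; auto. }
  exists sg, g, D; split; [auto|split; [|split]].
  -
    assert (BgB : forall v, B (g v) -> B v).
    { intros v H. assert (H' := Hs (g v)). rewrite Eg3 in H'. apply H'.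
      intros Ag; apply (AB (g v)); auto. }
    set (X := fun v => B v /\ A (g v)).
    destruct FK as [LK HLK].
    assert (FKg : Fin (fun v => K (g v))) by (apply Fin_img with sg; auto; exists LK; auto).
    assert (FX : Fin X).
    { apply (fin_sep X (fun v => K v \/ K (g v))).
      - intros x y [Bx Ax] Hxy.
        destruct (clBK x y Bx Hxy) as [By|Ky]; [|right; left; auto].
        destruct (closed_img A K sg g Hag clAK x y Ax Hxy) as [Ay|Ky]; [|right; right; auto].
        left; split; auto.
      - apply Fin_or; auto. exists LK; auto.
      - exists N1; intros n Hn [Bn _]; apply (AB (r1 n)); auto.
      - destruct (tail_avoid r2 _ r2ray FKg) as [N3 HN3].
        set (N4 := Nat.max N2 N3).
        destruct (part (g (r2 N4))) as [Ag|[Kg|Bg]].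
        + exfalso.
          assert (tA2 : forall n, N4 <= n -> A (g (r2 n))).
          { apply (tail_stay (fun v => A (g v)) (fun v => K (g v)) r2 N4 r2ray); auto.
            - apply closed_img with sg; auto.
            - intros n Hn; apply HN3; unfold N4 in Hn; lia. }
          assert (ray3 := ray_aut sg g r2 Hag r2ray).
          assert (Hcov : forall v, K (g v) -> In v (map sg LK)).
          { intros v Kv; rewrite <- (Eg3 v); apply in_map; auto. }
          destruct (ends _ ray3) as [E|E]; revert E.
          * apply (sep (fun v => B (g v)) (fun v => K (g v)) (map sg LK)
                     (closed_img B K sg g Hag clBK) Hcov _ r1 N2 N1).
            -- intros n Hn; simpl; rewrite Eg2; auto.
            -- intros n Hn H. apply BgB in H. apply (AB (r1 n)); auto.
          * apply (sep (fun v => B (g v)) (fun v => K (g v)) (map sg LK)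
                     (closed_img B K sg g Hag clBK) Hcov _ r2 N2 N4).
            -- intros n Hn; simpl; rewrite Eg2; auto.
            -- intros n Hn H. apply (AB (g (r2 n))); auto.
        + exfalso; apply (HN3 N4); auto. unfold N4; lia.
        + exists N4. intros n Hn [_ Ag].
          assert (H : B (g (r2 n))).
          { apply (tail_stay (fun v => B (g v)) (fun v => K (g v)) r2 N4 r2ray); auto.
            - apply closed_img with sg; auto.
            - intros m Hm; apply HN3; unfold N4 in Hm; lia. }
          apply (AB (g (r2 n))); auto. }
    apply Fin_sub with (fun v => K v \/ X v).
    + apply Fin_or; auto. exists LK; auto.
    + intros v [nA Ag]. destruct (classic (B v)); [right; split; auto|left; split; auto].
  - intros v. destruct (classic (A v)) as [Av|Av].
    + destruct (P1 v) as [n Hn]. destruct (L1 n v Av Hn) as [k [_ Dk]].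
      exists (Nat.iter k sg v), k; split; auto. right. symmetry; apply iter_cancel; auto.
    + destruct (P2 v) as [n Hn]. set (w := Nat.iter n g v) in *.
      assert (Ew : Nat.iter n sg w = v) by (apply (iter_cancel g sg); apply Aut_inv; auto).
      destruct (L1 n w Hn) as [k [Hk Dk]]; [rewrite Ew; auto|].
      exists (Nat.iter k sg w), (n - k); split; auto; left.
      rewrite <- iter_plus. replace (n - k + k) with n by lia. auto.
  - intros d d' k Dd Dd' E.
    assert (upT : forall m x, ~ A x -> ~ A (Nat.iter m sg x)).
    { induction m; simpl; auto. intros x H Ha. apply (AB _ Ha). apply Hs. apply IHm; auto. }
    destruct Dd as [_ Agd]. rewrite <- E in Agd. simpl in Agd. rewrite Eg2 in Agd.
    apply (upT k d' (proj1 Dd')); auto.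
Qed.

End Ends.

Section Color.
Variables (sg g : V -> V) (D : V -> Prop).
Hypothesis Hag : Aut sg g.
Hypothesis FD : Fin D.
Hypothesis orb : forall v, exists d k, D d /\ (v = Nat.iter k sg d \/ v = Nat.iter k g d).
Hypothesis free : forall d d' k, D d -> D d' -> Nat.iter (Datatypes.S k) sg d' = d -> False.

Open Scope Z_scope.

Definition pw (i : Z) (v : V) : V :=
  if Z.leb 0 i then Nat.iter (Z.to_nat i) sg v else Nat.iter (Z.to_nat (- i)) g v.

Lemma pw_succ i v : pw (Z.succ i) v = sg (pw i v).
Proof.
  destruct Hag as [_ [E2 E3]].
  unfold pw. destruct (Z.leb_spec 0 i) as [Hi|Hi].
  - destruct (Z.leb_spec 0 (Z.succ i)) as [Hi'|Hi']; [|lia].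
    rewrite Z2Nat.inj_succ by lia. reflexivity.
  - destruct (Z.leb_spec 0 (Z.succ i)) as [Hi'|Hi'].
    + assert (i = -1) by lia; subst. simpl. auto.
    + replace (Z.to_nat (- i)) with (Datatypes.S (Z.to_nat (- Z.succ i))).
      * simpl. rewrite E3. auto.
      * rewrite <- Z2Nat.inj_succ by lia. f_equal; lia.
Qed.

Lemma pw_pred i v : pw (Z.pred i) v = g (pw i v).
Proof.
  destruct Hag as [_ [E2 E3]].
  rewrite <- (Z.succ_pred i) at 2. rewrite pw_succ. rewrite E2. auto.
Qed.

Lemma pw_add i j v : pw (i + j) v = pw i (pw j v).
Proof.
  revert j v. induction i using Z.peano_ind; intros j v.
  - simpl. unfold pw at 2. simpl. auto.
  - replace (Z.succ i + j) with (Z.succ (i + j)) by lia. rewrite !pw_succ, IHi; auto.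
  - replace (Z.pred i + j) with (Z.pred (i + j)) by lia. rewrite !pw_pred, IHi; auto.
Qed.

Lemma pw_0 v : pw 0 v = v.
Proof. reflexivity. Qed.

Lemma pw_nat (n : nat) v : pw (Z.of_nat n) v = Nat.iter n sg v.
Proof. unfold pw. destruct (Z.leb_spec 0 (Z.of_nat n)); [|lia]. rewrite Nat2Z.id; auto. Qed.

Lemma pw_negnat (n : nat) v : pw (- Z.of_nat n) v = Nat.iter n g v.
Proof.
  destruct n; [reflexivity|]. unfold pw. destruct (Z.leb_spec 0 (- Z.of_nat (Datatypes.S n))); [lia|].
  rewrite Z.opp_involutive, Nat2Z.id; auto.
Qed.

Lemma pw_inv i v : pw (- i) (pw i v) = v.
Proof. rewrite <- pw_add. replace (- i + i) with 0 by lia. auto. Qed.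

Lemma pw_aut i : Aut (pw i) (pw (- i)).
Proof.
  assert (fwd : forall m x y, adj x y -> adj (pw m x) (pw m y)).
  { intros m x y H. unfold pw. destruct (Z.leb 0 m).
    - apply iter_adj with g; auto.
    - apply iter_adj with sg; auto. apply Aut_inv; auto. }
  split; [|split].
  - intros x y; split; [apply fwd|]. intros H. apply (fwd (- i)) in H. rewrite !pw_inv in H; auto.
  - apply pw_inv.
  - intros x. rewrite <- (Z.opp_involutive i) at 1. apply pw_inv.
Qed.

Lemma rep_ex v : exists p : Z * V, D (snd p) /\ v = pw (fst p) (snd p).
Proof.
  destruct (orb v) as [d [k [Dd [E|E]]]].
  - exists (Z.of_nat k, d); simpl; split; auto. rewrite pw_nat; auto.
  - exists (- Z.of_nat k, d); simpl; split; auto. rewrite pw_negnat; auto.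
Qed.

Lemma rep_uniq i j d d' : D d -> D d' -> pw i d = pw j d' -> i = j /\ d = d'.
Proof.
  intros Dd Dd' E.
  assert (Hneg : forall a b m, D a -> D b -> 0 < m -> pw m b = a -> False).
  { intros a b m Da Db Hm Em. apply (free a b (Z.to_nat m - 1)); auto.
    rewrite <- pw_nat. rewrite <- Em. f_equal. lia. }
  assert (E1 : d = pw (j - i) d').
  { rewrite <- (pw_inv i d), E, <- pw_add. f_equal; lia. }
  assert (E2 : d' = pw (i - j) d).
  { rewrite <- (pw_inv j d'), <- E, <- pw_add. f_equal; lia. }
  destruct (Z.lt_trichotomy i j) as [H|[H|H]].
  - exfalso; apply (Hneg d d' (j - i)); auto; lia.
  - split; auto. rewrite E1, H. replace (j - j) with 0 by lia. auto.
  - exfalso; apply (Hneg d' d (i - j)); auto; lia.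
Qed.


Variable rep : V -> Z * V.
Hypothesis rep_spec : forall v, D (snd (rep v)) /\ v = pw (fst (rep v)) (snd (rep v)).

Lemma rep_pw i d : D d -> rep (pw i d) = (i, d).
Proof.
  intros Dd. destruct (rep_spec (pw i d)) as [Dd' E].
  destruct (rep_uniq i (fst (rep (pw i d))) d (snd (rep (pw i d))) Dd Dd' E) as [E1 E2].
  destruct (rep (pw i d)); simpl in *; subst; auto.
Qed.

Lemma rep_shift m v : rep (pw m v) = (m + fst (rep v), snd (rep v)).
Proof.
  destruct (rep_spec v) as [Dv E]. rewrite E at 1. rewrite <- pw_add. apply rep_pw; auto.
Qed.

Lemma bound : exists M0 : nat, forall x y, adj x y -> Z.abs (fst (rep y) - fst (rep x)) <= Z.of_nat M0.
Proof.
  destruct FD as [LD HLD].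
  destruct (unif_bound (fun n d => forall w, adj d w -> Z.abs (fst (rep w)) <= Z.of_nat n)) with (l := LD)
    as [M0 HM0].
  { intros n m a Hnm H w Hw. specialize (H w Hw). lia. }
  { intros d _. destruct (lf d) as [l Hl].
    destruct (unif_bound (fun n w => Z.abs (fst (rep w)) <= Z.of_nat n)) with (l := l) as [n Hn].
    - intros n m a Hnm H. lia.
    - intros w _. exists (Z.to_nat (Z.abs (fst (rep w)))). rewrite Z2Nat.id; lia.
    - exists n. intros w Hw. apply Hn, Hl; auto. }
  exists M0. intros x y Hxy.
  destruct (rep_spec x) as [Dx Ex].
  assert (H : adj (pw (- fst (rep x)) x) (pw (- fst (rep x)) y)).
  { apply (Aut_adj _ _ _ _ (pw_aut (- fst (rep x)))); auto. }
  assert (Hd : pw (- fst (rep x)) x = snd (rep x)).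
  { transitivity (pw (- fst (rep x)) (pw (fst (rep x)) (snd (rep x)))); [f_equal; exact Ex|apply pw_inv]. }
  rewrite Hd in H.
  assert (Hr := rep_shift (- fst (rep x)) y).
  specialize (HM0 (snd (rep x)) (HLD _ Dx) _ H). rewrite Hr in HM0. simpl in HM0.
  replace (fst (rep y) - fst (rep x)) with (- fst (rep x) + fst (rep y)) by lia. auto.
Qed.


Lemma map_eq_in {A B : Type} (f h : A -> B) (l : list A) :
  map f l = map h l -> forall x, In x l -> f x = h x.
Proof.
  induction l as [|a l IH]; simpl; intros E x Hx; [destruct Hx|].
  injection E; intros E2 E1. destruct Hx as [<-|Hx]; auto.
Qed.

Lemma all_lists (n k : nat) : exists L : list (list nat), forall l, length l = n ->
  (forall x, In x l -> (x < k)%nat) -> In l L.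
Proof.
  induction n as [|n [L HL]].
  - exists [[]]; intros l Hl _; destruct l; [left; auto|discriminate].
  - exists (concat (map (fun x => map (cons x) L) (seq 0 k))).
    intros [|x l] Hl Hx; [discriminate|]. apply in_concat.
    exists (map (cons x) L); split.
    + apply in_map_iff; exists x; split; auto. apply in_seq. assert (x < k)%nat by (apply Hx; left; auto). lia.
    + apply in_map. apply HL; [simpl in Hl; lia|]. intros y Hy; apply Hx; right; auto.
Qed.

Lemma exists_coloring : exists k c, proper_coloring V adj k c.
Proof.
  destruct bound as [M0 HM0].
  destruct FD as [LD HLD].
  set (W := Datatypes.S M0).
  assert (Hp : forall v, exists n, nth_error LD n = Some (snd (rep v))).
  { intros v. apply In_nth_error. apply HLD. apply rep_spec. }
  destruct (choice _ Hp) as [pos Hpos].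
  set (r := fun v => Z.to_nat (fst (rep v) mod Z.of_nat W)).
  assert (Hr : forall v, (r v < W)%nat).
  { intros v. unfold r. assert (H := Z.mod_pos_bound (fst (rep v)) (Z.of_nat W)). lia. }
  assert (Hpl : forall v, (pos v < length LD)%nat).
  { intros v. apply nth_error_Some. rewrite Hpos; discriminate. }
  exists (length LD * W)%nat, (fun v => pos v * W + r v)%nat. split.
  - intros v. specialize (Hr v). specialize (Hpl v). nia.
  - intros x y Hxy E.
    assert (Ep : pos x = pos y /\ r x = r y).
    { assert (Hrx := Hr x); assert (Hry := Hr y). clear -E Hrx Hry.
      destruct (Nat.lt_trichotomy (pos x) (pos y)) as [H|[H|H]]; [nia| |nia]. split; auto. lia. }
    destruct Ep as [Ep Er].
    assert (Eb : snd (rep x) = snd (rep y)).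
    { assert (H1 := Hpos x). assert (H2 := Hpos y). rewrite Ep in H1. rewrite H1 in H2. injection H2; auto. }
    assert (Ei : fst (rep x) = fst (rep y)).
    { unfold r in Er. apply Z2Nat.inj in Er; try (apply Z.mod_pos_bound; lia).
      assert (Hx := Z.div_mod (fst (rep x)) (Z.of_nat W) ltac:(lia)).
      assert (Hy := Z.div_mod (fst (rep y)) (Z.of_nat W) ltac:(lia)).
      specialize (HM0 x y Hxy).
      remember (fst (rep x)) as ix. remember (fst (rep y)) as iy.
      remember (ix / Z.of_nat W) as qx. remember (iy / Z.of_nat W) as qy.
      remember (ix mod Z.of_nat W) as rx. remember (iy mod Z.of_nat W) as ry.
      assert (qx = qy).
      { destruct (Z.lt_trichotomy qx qy) as [H|[H|H]]; [|auto|]; unfold W in *; nia. }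
      subst; lia. }
    assert (Exy : x = y).
    { destruct (rep_spec x) as [_ Ex]; destruct (rep_spec y) as [_ Ey].
      rewrite Ex, Ey, Eb, Ei; reflexivity. }
    apply (adj_irr y). rewrite <- Exy at 1. exact Hxy.
Qed.

Lemma periodic_exists k c0 : proper_coloring V adj k c0 ->
  exists c, proper_coloring V adj k c /\ periodic_coloring V adj c.
Proof.
  intros [Hk0 Hp0].
  destruct bound as [M0 HM0].
  destruct FD as [LD HLD].
  set (W := Datatypes.S M0).
  set (LP := list_prod LD (seq 0 W)).
  set (pat := fun a : nat => map (fun pr => c0 (pw (Z.of_nat (a * W) + Z.of_nat (snd pr)) (fst pr))) LP).
  destruct (all_lists (length LP) k) as [L HL].
  destruct (php (length L) L pat) as [a [b [Hab Epat]]]; [lia| |].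
  { intros n. apply HL; unfold pat; [rewrite length_map; auto|].
    intros x Hx. apply in_map_iff in Hx. destruct Hx as [pr [<- _]]. apply Hk0. }
  set (I := Z.of_nat (a * W)).
  set (p := Z.of_nat (b * W) - Z.of_nat (a * W)).
  assert (HpW : Z.of_nat W <= p) by (unfold p; nia).
  assert (Hpat : forall d t, In d LD -> (t < W)%nat ->
     c0 (pw (I + Z.of_nat t) d) = c0 (pw (I + p + Z.of_nat t) d)).
  { intros d t Hd Ht.
    assert (H := map_eq_in _ _ _ Epat (d, t)). simpl in H. unfold I.
    replace (Z.of_nat (a * W) + p) with (Z.of_nat (b * W)) by (unfold p; lia).
    apply H. apply in_prod; auto. apply in_seq; lia. }
  set (c := fun v => c0 (pw (I + (fst (rep v) - I) mod p) (snd (rep v)))).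
  assert (key : forall x y, adj x y -> 0 <= (fst (rep x) - I) mod p + (fst (rep y) - fst (rep x)) ->
     c x <> c y).
  { intros x y Hxy Hnn.
    set (i := fst (rep x)) in *. set (j := fst (rep y)) in *.
    set (d := snd (rep x)). set (d' := snd (rep y)).
    assert (Hdm := Z.div_mod (i - I) p ltac:(lia)).
    set (q := (i - I) / p) in *. set (r := (i - I) mod p) in *.
    assert (Hr := Z.mod_pos_bound (i - I) p ltac:(lia)). fold r in Hr.
    assert (HM := HM0 x y Hxy). fold i j in HM.
    assert (Had : adj (pw (I + r) d) (pw (I + r + (j - i)) d')).
    { assert (H := Aut_adj _ _ _ _ (pw_aut (I + r - i)) Hxy).
      destruct (rep_spec x) as [_ Ex]. destruct (rep_spec y) as [_ Ey].
      rewrite Ex, Ey in H. rewrite <- !pw_add in H. fold i j d d' in H.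
      replace (I + r - i + i) with (I + r) in H by lia.
      replace (I + r - i + j) with (I + r + (j - i)) in H by lia. auto. }
    assert (Ecx : c x = c0 (pw (I + r) d)) by reflexivity.
    destruct (Z.lt_ge_cases (r + (j - i)) p) as [Hlt|Hge].
    - assert (Em : (j - I) mod p = r + (j - i)).
      { symmetry; apply Z.mod_unique with q; lia. }
      assert (Ecy : c y = c0 (pw (I + r + (j - i)) d')).
      { unfold c. fold j d'. rewrite Em. f_equal. f_equal. lia. }
      rewrite Ecx, Ecy. apply Hp0; auto.
    - assert (Em : (j - I) mod p = r + (j - i) - p).
      { symmetry; apply Z.mod_unique with (q + 1); [lia|nia]. }
      assert (Ht : 0 <= r + (j - i) - p < Z.of_nat W) by (unfold W in *; lia).
      assert (Ecy : c y = c0 (pw (I + r + (j - i)) d')).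
      { unfold c. fold j d'. rewrite Em.
        replace (r + (j - i) - p) with (Z.of_nat (Z.to_nat (r + (j - i) - p))) by (rewrite Z2Nat.id; lia).
        rewrite Hpat.
        - f_equal; f_equal. rewrite Z2Nat.id; lia.
        - apply HLD. apply rep_spec.
        - lia. }
      rewrite Ecx, Ecy. apply Hp0; auto. }
  exists c; split; [split|].
  - intros v; apply Hk0.
  - intros x y Hxy.
    destruct (Z_le_gt_dec 0 ((fst (rep x) - I) mod p + (fst (rep y) - fst (rep x)))) as [H|H].
    + apply key; auto.
    + intros E; symmetry in E; revert E. apply key; [apply adj_sym; auto|].
      assert (Hdm := Z.div_mod (fst (rep x) - I) p ltac:(lia)).
      assert (Hr := Z.mod_pos_bound (fst (rep x) - I) p ltac:(lia)).
      assert (HM := HM0 x y Hxy).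
      assert (Em : (fst (rep y) - I) mod p = (fst (rep x) - I) mod p + (fst (rep y) - fst (rep x)) + p).
      { symmetry; apply Z.mod_unique with ((fst (rep x) - I) / p - 1); [unfold W in *; lia|nia]. }
      rewrite Em. lia.
  - exists (map (fun pr => pw (Z.of_nat (snd pr)) (fst pr)) (list_prod LD (seq 0 (Z.to_nat p)))).
    intros v. destruct (rep_spec v) as [Dv Ev].
    set (i := fst (rep v)) in *. set (d := snd (rep v)) in *.
    assert (Hdm := Z.div_mod i p ltac:(lia)).
    assert (Hr := Z.mod_pos_bound i p ltac:(lia)).
    exists (pw (i mod p) d), (pw (p * (i / p))); split; [|split].
    + apply in_map_iff. exists (d, Z.to_nat (i mod p)); split.
      * simpl. rewrite Z2Nat.id by lia; reflexivity.
      * apply in_prod; [apply HLD; auto|]. apply in_seq. lia.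
    + split; [apply is_aut_of_Aut with (pw (- (p * (i / p)))); apply pw_aut|].
      intros w. unfold c. rewrite rep_shift. simpl. f_equal. f_equal. f_equal.
      replace (p * (i / p) + fst (rep w) - I) with ((fst (rep w) - I) + (i / p) * p) by lia.
      apply Z.mod_add. lia.
    + rewrite <- pw_add. rewrite <- Hdm. symmetry; exact Ev.
Qed.

End Color. End Main.

Lemma nat_min (P : nat -> Prop) : (exists n, P n) -> exists n, P n /\ forall m, P m -> n <= m.
Proof.
  intros [n Hn]. induction n as [n IH] using lt_wf_ind.
  destruct (classic (exists m, m < n /\ P m)) as [[m [Hm Pm]]|Hno].
  - apply (IH m Hm Pm).
  - exists n; split; auto. intros m Pm. destruct (Nat.lt_ge_cases m n); auto.
    exfalso; apply Hno; eauto.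
Qed.

Theorem theorem5p4 (V : Type) (adj : V -> V -> Prop) :
  simple_graph V adj ->
  connected V adj ->
  locally_finite V adj ->
  quasi_transitive V adj ->
  has_exactly_two_ends V adj ->
  exists (k : nat) (c : V -> nat),
    chromatic_number V adj k /\ proper_coloring V adj k c /\
    periodic_coloring V adj c.
Proof.
  intros [Hsym Hirr] Hconn Hlf Hqt [r1 [r2 [R1 [R2 [N12 Hends]]]]].
  destruct (structure_thm V adj Hsym Hlf Hconn r1 r2 R1 R2 N12 Hends Hqt)
    as [sg [g [D [Hag [FD [Horb Hfree]]]]]].
  destruct (choice _ (rep_ex V sg g D Horb)) as [rep Hrep].
  destruct (exists_coloring V adj Hirr Hlf sg g D Hag FD Hfree rep Hrep) as [k0 [c1 Hc1]].
  destruct (nat_min (fun k => exists c, proper_coloring V adj k c)) as [k [[c0 Hc0] Hmin]].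
  { exists k0, c1; auto. }
  destruct (periodic_exists V adj Hsym Hlf sg g D Hag FD Hfree rep Hrep k c0 Hc0) as [c [Hc Hper]].
  exists k, c. split; [split|split]; auto.
  - exists c0; auto.
  - intros j c' H. apply Hmin. exists c'; auto.
Qed.
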